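(* Let $\Sigma$ be a finite alphabet and let $L_1, L_2 \subseteq \Sigma^*$ be regular languages. Then $L_1 \leftarrow L_2$ is regular.
   Context: For strings $x, y \in \Sigma^*$, the outfix-guided insertion of $y$ into $x$ is $x \leftarrow y = \{ x_1 u z v x_2 \mid x = x_1 u v x_2,\ y = u z v,\ u \neq \varepsilon,\ v \neq \varepsilon \}$. For languages, $L_1 \leftarrow L_2 = \bigcup_{x \in L_1, y \in L_2} x \leftarrow y$. *)

(* Defs.v *)
From mathcomp Require Import all_boot.
Set Implicit Arguments. Unset Strict Implicit. Unset Printing Implicit Defensive.

Definition lang (Sigma : finType) := seq Sigma -> Prop.

Record dfa (Sigma : finType) := DFA {
  dfa_state : finType;
  dfa_start : dfa_state;
  dfa_final : {set dfa_state};
  dfa_trans : dfa_state -> Sigma -> dfa_state }.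

Definition dfa_accepts (Sigma : finType) (A : dfa Sigma) (w : seq Sigma) : bool :=
  foldl (@dfa_trans Sigma A) (@dfa_start Sigma A) w \in @dfa_final Sigma A.

Definition regular (Sigma : finType) (L : lang Sigma) : Prop :=
  exists A : dfa Sigma, forall w, L w <-> dfa_accepts A w.

Definition outfix_ins (Sigma : finType) (x y : seq Sigma) : lang Sigma :=
  fun w => exists x1 u z v x2 : seq Sigma,
    [/\ x = x1 ++ u ++ v ++ x2, y = u ++ z ++ v, u <> [::], v <> [::]
      & w = x1 ++ u ++ z ++ v ++ x2].

Definition outfix_ins_lang (Sigma : finType) (L1 L2 : lang Sigma) : lang Sigma :=
  fun w => exists x y, [/\ L1 x, L2 y & outfix_ins x y w].

(* Main.v *)
Require Import Defs.
From mathcomp Require Import all_boot.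

Set Implicit Arguments. Unset Strict Implicit. Unset Printing Implicit Defensive.

Section Constr.
Variable Sigma : finType.
Variables A1 A2 : dfa Sigma.

Definition Q1 := dfa_state A1.
Definition Q2 := dfa_state A2.
Definition d1 (p : Q1) (w : seq Sigma) : Q1 := foldl (@dfa_trans _ A1) p w.
Definition d2 (q : Q2) (w : seq Sigma) : Q2 := foldl (@dfa_trans _ A2) q w.
Definition t1 (p : Q1) a : Q1 := dfa_trans p a.
Definition t2 (q : Q2) a : Q2 := dfa_trans q a.

Definition C : finType := ((((Q1 + Q1 * Q2) + Q1 * Q2) + Q1 * Q2) + Q1)%type.
Definition P0 (p : Q1) : C := inl (inl (inl (inl p))).
Definition P1 (p : Q1) (q : Q2) : C := inl (inl (inl (inr (p, q)))).
Definition P2 (p : Q1) (q : Q2) : C := inl (inl (inr (p, q))).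
Definition P3 (p : Q1) (q : Q2) : C := inl (inr (p, q)).
Definition P4 (p : Q1) : C := inr p.

Definition next (c : C) (a : Sigma) : seq C :=
  match c with
  | inl (inl (inl (inl p))) => [:: P0 (t1 p a); P1 (t1 p a) (t2 (dfa_start A2) a)]
  | inl (inl (inl (inr (p, q)))) => [:: P1 (t1 p a) (t2 q a); P2 p (t2 q a); P3 (t1 p a) (t2 q a)]
  | inl (inl (inr (p, q))) => [:: P2 p (t2 q a); P3 (t1 p a) (t2 q a)]
  | inl (inr (p, q)) => P3 (t1 p a) (t2 q a) :: (if q \in dfa_final A2 then [:: P4 (t1 p a)] else [::])
  | inr p => [:: P4 (t1 p a)]
  end.

Definition fin (c : C) : bool :=
  match c with
  | inl (inr (p, q)) => (p \in dfa_final A1) && (q \in dfa_final A2)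
  | inr p => p \in dfa_final A1
  | _ => false
  end.

Fixpoint accb (c : C) (w : seq Sigma) : bool :=
  match w with
  | [::] => fin c
  | a :: w' => has (fun c' => accb c' w') (next c a)
  end.

Definition sdfa : dfa Sigma :=
  @DFA Sigma ({set C} : finType) [set P0 (dfa_start A1)]
    [set S : {set C} | [exists c in S, fin c]]
    (fun S a => [set c' | [exists c in S, c' \in next c a]]).

Lemma sdfa_foldl (w : seq Sigma) (S : {set C}) :
  (foldl (@dfa_trans _ sdfa) S w \in @dfa_final _ sdfa) = [exists c in S, accb c w].
Proof.
elim: w S => [|a w IH] S /=; first by rewrite inE.
rewrite IH; apply/existsP/existsP => [[c /andP[]]|[c /andP[cS]]].
  rewrite inE => /existsP[c0 /andP[c0S cn]] acc.
  exists c0; rewrite c0S /=; apply/hasP; by exists c.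
move=> /hasP[c' c'n acc]; exists c'; rewrite acc andbT inE.
apply/existsP; exists c; by rewrite cS.
Qed.

Lemma acc4 p w : accb (P4 p) w = (d1 p w \in dfa_final A1).
Proof. by elim: w p => [|a w IH] p //=; rewrite orbF IH. Qed.

Lemma acc3 p q w : accb (P3 p q) w <->
  exists v x2, [/\ w = v ++ x2, d2 q v \in dfa_final A2 & d1 p (v ++ x2) \in dfa_final A1].
Proof.
elim: w p q => [|a w IH] p q /=.
  split; first by move=> /andP[H1 H2]; exists [::], [::].
  by case=> [[|? ?] [[|? ?] [] // _ H1 H2]]; rewrite H1 H2.
split.
  case/orP=> [/IH [v [x2 [-> H1 H2]]]|].
    by exists (a :: v), x2.
  case: ifP => //= qF; rewrite orbF acc4 => H.
  by exists [::], (a :: w).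
case=> [[|b v] [x2 [E H1 H2]]].
  move: E H1 H2 => /= <- qF H; apply/orP; right; rewrite qF /= orbF acc4 //.
case: E => ? E; subst; apply/orP; left; apply/IH; exists v, x2; by split.
Qed.

Lemma acc2 p q w : accb (P2 p q) w <->
  exists z v x2, [/\ w = z ++ v ++ x2, v <> [::], d2 q (z ++ v) \in dfa_final A2
     & d1 p (v ++ x2) \in dfa_final A1].
Proof.
elim: w p q => [|a w IH] p q /=.
  split => //; by case=> [[|? ?] [[|? ?] [[|? ?] [] //]]].
rewrite orbF; split.
  case/orP=> [/IH [z [v [x2 [-> Hv H1 H2]]]]|/acc3 [v [x2 [-> H1 H2]]]].
    by exists (a :: z), v, x2.
  by exists [::], (a :: v), x2.
case=> [[|b z] [v [x2 [E Hv H1 H2]]]].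
  move: E H1 H2 Hv; case: v => [|b v] //= [<- ->] H1 H2 _.
  apply/orP; right; apply/acc3; by exists v, x2.
case: E => ? E; subst; apply/orP; left; apply/IH; exists z, v, x2; by split.
Qed.

Lemma acc1 p q w : accb (P1 p q) w <->
  exists u z v x2, [/\ w = u ++ z ++ v ++ x2, v <> [::], d2 q (u ++ z ++ v) \in dfa_final A2
     & d1 p (u ++ v ++ x2) \in dfa_final A1].
Proof.
elim: w p q => [|a w IH] p q /=.
  split => //; by case=> [[|? ?] [[|? ?] [[|? ?] [? [] //]]]].
rewrite orbF; split.
  case/orP=> [/IH [u [z [v [x2 [-> Hv H1 H2]]]]]|/orP[]].
  - by exists (a :: u), z, v, x2.
  - move/acc2 => [z [v [x2 [-> Hv H1 H2]]]]; by exists [::], (a :: z), v, x2.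
  - move/acc3 => [v [x2 [-> H1 H2]]]; by exists [::], [::], (a :: v), x2.
case=> [[|b u] [z [v [x2 [E Hv H1 H2]]]]].
  move: E H1 H2 Hv; case: z => [|b z] /=.
    case: v => [|b v] //= [<- ->] H1 H2 _.
    apply/orP; right; apply/orP; right; apply/acc3; by exists v, x2.
  case=> <- -> H1 H2 Hv; apply/orP; right; apply/orP; left; apply/acc2.
  by exists z, v, x2.
case: E => ? E; subst; apply/orP; left; apply/IH; exists u, z, v, x2; by split.
Qed.

Lemma acc0 p w : accb (P0 p) w <->
  exists x1 u z v x2, [/\ w = x1 ++ u ++ z ++ v ++ x2, u <> [::], v <> [::],
     d2 (dfa_start A2) (u ++ z ++ v) \in dfa_final A2
     & d1 p (x1 ++ u ++ v ++ x2) \in dfa_final A1].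
Proof.
elim: w p => [|a w IH] p /=.
  split => //; by case=> [[|? ?] [[|? ?] [? [? [? [] //]]]]].
rewrite orbF; split.
  case/orP=> [/IH [x1 [u [z [v [x2 [-> Hu Hv H1 H2]]]]]]|].
    by exists (a :: x1), u, z, v, x2.
  move/acc1 => [u [z [v [x2 [-> Hv H1 H2]]]]]; by exists [::], (a :: u), z, v, x2.
case=> [[|b x1] [u [z [v [x2 [E Hu Hv H1 H2]]]]]].
  move: E H1 H2 Hu; case: u => [|b u] //= [<- ->] H1 H2 _.
  apply/orP; right; apply/acc1; by exists u, z, v, x2.
case: E => ? E; subst; apply/orP; left; apply/IH; exists x1, u, z, v, x2; by split.
Qed.

End Constr.

Theorem lemma4p1 (Sigma : finType) (L1 L2 : lang Sigma) :
  regular L1 -> regular L2 -> regular (outfix_ins_lang L1 L2).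
Proof.
move=> [A1 HA1] [A2 HA2]; exists (sdfa A1 A2) => w.
rewrite /dfa_accepts sdfa_foldl.
have E : (@accb _ A1 A2 (@P0 _ A1 A2 (dfa_start A1)) w) =
    [exists c in [set @P0 _ A1 A2 (dfa_start A1)], accb c w].
  apply/idP/idP; first by move=> H; apply/existsP; exists (@P0 _ A1 A2 (dfa_start A1)); rewrite inE eqxx.
  by case/existsP=> c /andP[]; rewrite inE => /eqP ->.
rewrite -E.
split.
  move=> [x [y [Lx Ly [x1 [u [z [v [x2 [Ex Ey Hu Hv Ew]]]]]]]]].
  apply/acc0; exists x1, u, z, v, x2; split => //.
    by move: Ly => /HA2; rewrite Ey.
  by move: Lx => /HA1; rewrite Ex.
move/acc0=> [x1 [u [z [v [x2 [Ew Hu Hv H1 H2]]]]]].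
exists (x1 ++ u ++ v ++ x2), (u ++ z ++ v); split.
- by apply/HA1.
- by apply/HA2.
- by exists x1, u, z, v, x2.
Qed.
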